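(* In the periodic lock scheduling problem, there exists an optimal schedule $\sigma$ such that no two consecutive periods $t$ and $t+1$ both have $\sigma(t)=\sigma(t+1)=W$.
   Context: Periodic lock scheduling problem. Time is discrete, periods $t=1,2,\dots$. There are $k$ vessel streams; stream $i$ has a direction $\delta_i\in\{D,U\}$, an integer periodicity $\lambda_i\ge1$ and an integer offset $1\le\mu_i\le\lambda_i$; $a_i(t)=1$ if $t\equiv\mu_i\pmod{\lambda_i}$ and $0$ otherwise, $a_\delta(t)=\sum_{i:\delta_i=\delta}a_i(t)$. A schedule is a sequence $\sigma=(\sigma(t))_{t\ge1}$ with $\sigma(t)\in\{D,U,W\}$ ($D$: process downstream waiting vessels and switch alignment from downstream to upstream; $U$ symmetrically; $W$: wait at current alignment); the initial orientation is arbitrary; it is feasible if the non-$W$ actions alternate between $D$ and $U$. Queue lengths: $n_D(0)=n_U(0)=0$ and for $t\ge1$, $n_\delta(t)=0$ if $\sigma(t)=\delta$ and $n_\delta(t)=n_\delta(t-1)+a_\delta(t)$ otherwise. $C_\sigma(t)=n_D(t)+n_U(t)$ and $C_{\mathrm{avg},\sigma}=\lim_{T\to\infty}\frac1T\sum_{t=1}^TC_\sigma(t)$. A schedule is optimal if it is feasible and minimizes $C_{\mathrm{avg},\sigma}$ over all feasible schedules. *)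

(* Defs.v *)
From Stdlib Require Import Reals Arith Lia.
From Coquelicot Require Import Coquelicot.
Open Scope R_scope.

Inductive dir : Type := Dn | Up.
Inductive action : Type := AD | AU | AW.

Definition act_of (d : dir) : action := match d with Dn => AD | Up => AU end.

Definition dir_eqb (x y : dir) : bool :=
  match x, y with Dn, Dn | Up, Up => true | _, _ => false end.
Definition act_eqb (x y : action) : bool :=
  match x, y with AD, AD | AU, AU | AW, AW => true | _, _ => false end.

Fixpoint natsum (f : nat -> nat) (n : nat) : nat :=
  match n with O => O | S m => (natsum f m + f m)%nat end.

(* An instance: k streams, stream i < k has direction dr i, periodicity
   lam i >= 1 and offset 1 <= mu i <= lam i. *)
Definition valid_instance (k : nat) (lam mu : nat -> nat) : Prop :=
  forall i, (i < k)%nat -> (1 <= lam i)%nat /\ (1 <= mu i <= lam i)%nat.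

Definition arr (lam mu : nat -> nat) (i t : nat) : nat :=
  if Nat.eqb (t mod lam i) (mu i mod lam i) then 1%nat else 0%nat.

Definition arr_dir (k : nat) (dr : nat -> dir) (lam mu : nat -> nat)
    (d : dir) (t : nat) : nat :=
  natsum (fun i => if dir_eqb (dr i) d then arr lam mu i t else 0%nat) k.

(* A schedule is a map from periods to actions; only periods t >= 1 matter. *)
Definition schedule := nat -> action.

Definition feasible (s : schedule) : Prop :=
  forall t1 t2, (1 <= t1)%nat -> (t1 < t2)%nat ->
    s t1 <> AW -> s t2 <> AW ->
    (forall t, (t1 < t)%nat -> (t < t2)%nat -> s t = AW) ->
    s t1 <> s t2.

Fixpoint queue (k : nat) (dr : nat -> dir) (lam mu : nat -> nat)
    (s : schedule) (d : dir) (t : nat) : nat :=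
  match t with
  | O => O
  | S t' => if act_eqb (s (S t')) (act_of d) then O
            else (queue k dr lam mu s d t' + arr_dir k dr lam mu d (S t'))%nat
  end.

Definition cost (k : nat) (dr : nat -> dir) (lam mu : nat -> nat)
    (s : schedule) (t : nat) : nat :=
  (queue k dr lam mu s Dn t + queue k dr lam mu s Up t)%nat.

(* Running average (1/T) sum_{t=1}^T C_s(t), indexed by n with T = n+1. *)
Definition avg_cost (k : nat) (dr : nat -> dir) (lam mu : nat -> nat)
    (s : schedule) (n : nat) : R :=
  INR (natsum (fun t => cost k dr lam mu s (S t)) (S n)) / INR (S n).

(* C_avg,s = l : the limit of the running averages exists and equals l
   (l in the extended reals, so +oo is allowed). *)
Definition Cavg_is (k : nat) (dr : nat -> dir) (lam mu : nat -> nat)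
    (s : schedule) (l : Rbar) : Prop :=
  is_lim_seq (avg_cost k dr lam mu s) l.

Definition optimal (k : nat) (dr : nat -> dir) (lam mu : nat -> nat)
    (s : schedule) : Prop :=
  feasible s /\
  exists l, Cavg_is k dr lam mu s l /\
    forall s' l', feasible s' -> Cavg_is k dr lam mu s' l' -> Rbar_le l l'.

(* Main.v *)
Require Import Defs.
From Stdlib Require Import Reals Arith Lia Lra Wf_nat Classical.
From Coquelicot Require Import Coquelicot.
Open Scope nat_scope.

Definition opp (d : dir) : dir := match d with Dn => Up | Up => Dn end.

Definition valid (s : schedule) (o : nat -> dir) : Prop :=
  (forall t d, s (S t) = act_of d -> o t = opp d /\ o (S t) = d) /\
  (forall t, s (S t) = AW -> o (S t) = o t) /\
  (forall t, (1 <= t)%nat -> ~ (s t = AW /\ s (S t) = AW)).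

Lemma act_nonW a : a <> AW -> exists d, a = act_of d.
Proof. destruct a; intros H; [exists Dn|exists Up|congruence]; reflexivity. Qed.

Lemma act_eqb_true a d : act_eqb a (act_of d) = true <-> a = act_of d.
Proof. destruct a, d; simpl; split; intros; congruence. Qed.

Lemma act_of_inj d e : act_of d = act_of e -> d = e.
Proof. destruct d, e; simpl; congruence. Qed.

Lemma act_of_nW d : act_of d <> AW.
Proof. destruct d; discriminate. Qed.

Lemma valid_feasible s o : valid s o -> feasible s.
Proof.
  intros [H1 [H2 H3]] t1 t2 Ht1 Ht12 Hs1 Hs2 Hmid.
  destruct (act_nonW _ Hs1) as [e He]. destruct (act_nonW _ Hs2) as [e' He'].
  destruct t1 as [|t1']; [lia|].
  assert (Ho1 : o (S t1') = e) by (apply (H1 _ _ He)).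
  assert (Hm : forall m, (S t1' + m < t2)%nat -> o (S t1' + m) = e).
  { induction m; intros Hm.
    - rewrite Nat.add_0_r; auto.
    - rewrite Nat.add_succ_r. rewrite H2.
      + apply IHm; lia.
      + apply Hmid; lia. }
  destruct t2 as [|t2']; [lia|].
  destruct (H1 _ _ He') as [Ho2 _].
  assert (o t2' = e) by (replace t2' with (S t1' + (t2' - S t1'))%nat by lia; apply Hm; lia).
  rewrite He, He'. intro Heq. apply act_of_inj in Heq. rewrite Ho2 in H. rewrite <- Heq in H. destruct e; discriminate.
Qed.

Lemma natsum_le f g n : (forall i, (i < n)%nat -> (f i <= g i)%nat) -> (natsum f n <= natsum g n)%nat.
Proof. induction n; simpl; intros H; [lia|]. specialize (IHn (fun i Hi => H i ltac:(lia))). specialize (H n ltac:(lia)). lia. Qed.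

Lemma natsum_ext f g n : (forall i, (i < n)%nat -> f i = g i) -> natsum f n = natsum g n.
Proof. induction n; simpl; intros H; [lia|]. rewrite IHn by (intros; apply H; lia). rewrite H by lia. reflexivity. Qed.

Lemma natsum_bound f n c : (forall i, (i < n)%nat -> (f i <= c)%nat) -> (natsum f n <= n * c)%nat.
Proof. induction n; simpl; intros H; [lia|]. specialize (IHn (fun i Hi => H i ltac:(lia))). specialize (H n ltac:(lia)). lia. Qed.

Lemma natsum_add f n m : natsum f (n + m) = (natsum f n + natsum (fun t => f (n + t)%nat) m)%nat.
Proof. induction m; simpl; [rewrite Nat.add_0_r; lia|]. rewrite Nat.add_succ_r. simpl. rewrite IHm. lia. Qed.

Lemma arr_le k dr lam mu d t : (arr_dir k dr lam mu d t <= k)%nat.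
Proof.
  unfold arr_dir. replace k with (k * 1)%nat at 2 by lia. apply natsum_bound.
  intros i _. unfold arr. destruct (dir_eqb _ _); [|lia]. destruct (Nat.eqb _ _); lia.
Qed.

Lemma queue_S k dr lam mu s d t : queue k dr lam mu s d (S t) =
  if act_eqb (s (S t)) (act_of d) then 0%nat else (queue k dr lam mu s d t + arr_dir k dr lam mu d (S t))%nat.
Proof. reflexivity. Qed.

Lemma queue_step k dr lam mu s d t : (queue k dr lam mu s d (S t) <= queue k dr lam mu s d t + k)%nat.
Proof. rewrite queue_S. destruct (act_eqb _ _); [lia|]. pose proof (arr_le k dr lam mu d (S t)). lia. Qed.

Lemma queue_small k dr lam mu s d t : (queue k dr lam mu s d t <= t * k)%nat.
Proof. induction t; [simpl; lia|]. pose proof (queue_step k dr lam mu s d t). simpl Nat.mul. lia. Qed.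

Lemma queue_from k dr lam mu s d tau m : (1 <= tau)%nat -> s tau = act_of d ->
  (queue k dr lam mu s d (tau + m) <= m * k)%nat.
Proof.
  intros H1 H2. induction m.
  - destruct tau; [lia|]. rewrite Nat.add_0_r, queue_S. apply act_eqb_true in H2. rewrite H2. lia.
  - rewrite Nat.add_succ_r. pose proof (queue_step k dr lam mu s d (tau + m)). simpl Nat.mul. lia.
Qed.

Lemma window s o t d : valid s o -> (4 <= t)%nat ->
  exists tau, (1 <= tau)%nat /\ (t - 3 <= tau <= t)%nat /\ s tau = act_of d.
Proof.
  intros [H1 [H2 H3]] Ht.
  assert (Hp : exists p, (t - 3 <= p <= t - 2)%nat /\ s p <> AW).
  { destruct (classic (s (t-3)%nat = AW)) as [Ha|Ha].
    - exists (t-2)%nat. split; [lia|]. intro Hb. apply (H3 (t-3)%nat); [lia|]. split; auto.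
      replace (S (t-3)) with (t-2)%nat by lia. auto.
    - exists (t-3)%nat. split; [lia|auto]. }
  destruct Hp as [p [Hp Hsp]]. destruct (act_nonW _ Hsp) as [e He].
  destruct p as [|p']; [lia|].
  destruct (H1 _ _ He) as [_ Hoe].
  assert (Hq : exists e', s (S (S p')) = act_of e' /\ e' = opp e \/ s (S (S (S p'))) = act_of e' /\ e' = opp e).
  { destruct (classic (s (S (S p')) = AW)) as [Ha|Ha].
    - assert (Hb : s (S (S (S p'))) <> AW) by (intro Hb; apply (H3 (S (S p'))); [lia|auto]).
      destruct (act_nonW _ Hb) as [e' He']. exists e'. right. split; auto.
      destruct (H1 _ _ He') as [Ho _]. rewrite H2 in Ho by auto. rewrite Hoe in Ho. rewrite Ho. destruct e'; reflexivity.
    - destruct (act_nonW _ Ha) as [e' He']. exists e'. left. split; auto.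
      destruct (H1 _ _ He') as [Ho _]. rewrite Hoe in Ho. rewrite Ho. destruct e'; reflexivity. }
  destruct (classic (d = e)) as [Hd|Hd].
  - subst. exists (S p'). split; [lia|split; [lia|auto]].
  - assert (d = opp e) by (destruct d, e; simpl; congruence). subst d.
    destruct Hq as [e' [[Hq Hq']|[Hq Hq']]]; subst e'.
    + exists (S (S p')). split; [lia|split; [lia|auto]].
    + exists (S (S (S p'))). split; [lia|split; [lia|auto]].
Qed.

Lemma queue_bound k dr lam mu s o d t : valid s o -> (queue k dr lam mu s d t <= 3 * k)%nat.
Proof.
  intros Hv. destruct (le_lt_dec 4 t) as [Ht|Ht].
  - destruct (window s o t d Hv Ht) as [tau [Ht1 [Ht2 Ht3]]].
    replace t with (tau + (t - tau))%nat by lia.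
    pose proof (queue_from k dr lam mu s d tau (t - tau) Ht1 Ht3). nia.
  - pose proof (queue_small k dr lam mu s d t). nia.
Qed.

Fixpoint orient (s : schedule) (o0 : dir) (t : nat) : dir :=
  match t with
  | O => o0
  | S t' => match s (S t') with AD => Dn | AU => Up | AW => orient s o0 t' end
  end.

Lemma opp_opp d : opp (opp d) = d. Proof. destruct d; reflexivity. Qed.

Lemma first_dir (s : schedule) : exists o0, forall t d, 1 <= t -> s t = act_of d ->
  (forall u, 1 <= u < t -> s u = AW) -> o0 = opp d.
Proof.
  destruct (classic (exists t, 1 <= t /\ s t <> AW)) as [Hex|Hno].
  - destruct (dec_inh_nat_subset_has_unique_least_element (fun t => 1 <= t /\ s t <> AW)
      (fun n => classic _) Hex) as [t0 [[[Ht0 Hs0] Hmin] _]].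
    destruct (act_nonW _ Hs0) as [e He]. exists (opp e). intros t d Ht Hsd Hbef.
    assert (Hle : t0 <= t) by (apply Hmin; split; [auto|rewrite Hsd; apply act_of_nW]).
    destruct (Nat.eq_dec t0 t) as [->|Hne].
    + rewrite Hsd in He. apply act_of_inj in He. subst. reflexivity.
    + exfalso. apply Hs0. apply Hbef. lia.
  - exists Dn. intros t d Ht Hsd _. exfalso. apply Hno. exists t. split; auto. rewrite Hsd. apply act_of_nW.
Qed.

Lemma orient_W s o0 t : s (S t) = AW -> orient s o0 (S t) = orient s o0 t.
Proof. intros H. simpl. rewrite H. reflexivity. Qed.

Lemma orient_act s o0 t d : s (S t) = act_of d -> orient s o0 (S t) = d.
Proof. intros H. simpl. rewrite H. destruct d; reflexivity. Qed.

Lemma orient_inv s o0 t :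
  ((forall u, 1 <= u <= t -> s u = AW) /\ orient s o0 t = o0) \/
  (exists p e, 1 <= p <= t /\ s p = act_of e /\ (forall u, p < u <= t -> s u = AW) /\ orient s o0 t = e).
Proof.
  induction t.
  - left. split; [intros; lia|reflexivity].
  - destruct (s (S t)) eqn:E.
    + right. exists (S t), Dn. split; [lia|]. split; [auto|]. split; [intros; lia|]. apply orient_act; auto.
    + right. exists (S t), Up. split; [lia|]. split; [auto|]. split; [intros; lia|]. apply orient_act; auto.
    + rewrite orient_W by auto. destruct IHt as [[H1 H2]|[p [e [H1 [H2 [H3 H4]]]]]].
      * left. split; auto. intros u Hu. destruct (Nat.eq_dec u (S t)); [subst; auto|]. apply H1; lia.
      * right. exists p, e. split; [lia|]. split; auto. split; auto.
        intros u Hu. destruct (Nat.eq_dec u (S t)); [subst; auto|]. apply H3; lia.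
Qed.

Lemma orient_prop s o0 : feasible s ->
  (forall t d, 1 <= t -> s t = act_of d -> (forall u, 1 <= u < t -> s u = AW) -> o0 = opp d) ->
  forall t d, s (S t) = act_of d -> orient s o0 t = opp d.
Proof.
  intros Hf Ho0 t d Hs.
  destruct (orient_inv s o0 t) as [[H1 H2]|[p [e [H1 [H2 [H3 H4]]]]]].
  - rewrite H2. apply (Ho0 (S t)); auto; [lia|]. intros u Hu. apply H1. lia.
  - rewrite H4. assert (Hne : s p <> s (S t)).
    { apply Hf; try lia; [rewrite H2; apply act_of_nW|rewrite Hs; apply act_of_nW|].
      intros u H5 H6. apply H3. lia. }
    rewrite H2, Hs in Hne. destruct e, d; simpl in *; congruence.
Qed.

Fixpoint gg (s : schedule) (o : nat -> dir) (t : nat) : action * bool :=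
  match t with
  | O => (AW, false)
  | S t' => match s (S t') with
            | AW => if snd (gg s o t') then (act_of (o t'), false)
                    else match s (S (S t')) with
                         | AW => (act_of (opp (o t')), true)
                         | _ => (AW, false) end
            | a => (a, false) end
  end.

Lemma gg_flag s o t : snd (gg s o t) = true -> s (S t) = AW.
Proof.
  destruct t; simpl; [discriminate|].
  destruct (s (S t)); simpl; try discriminate.
  destruct (snd (gg s o t)); simpl; [discriminate|].
  destruct (s (S (S t))) eqn:E; simpl; try discriminate. auto.
Qed.

Lemma gg_keep s o t : s (S t) <> AW -> fst (gg s o (S t)) = s (S t).
Proof. intros H. simpl. destruct (s (S t)); simpl; congruence. Qed.

Lemma gg_act s o t : s (S t) <> AW -> gg s o (S t) = (s (S t), false).
Proof. intros H. simpl. destruct (s (S t)); congruence. Qed.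
Lemma gg_Wf s o t : s (S t) = AW -> snd (gg s o t) = true -> gg s o (S t) = (act_of (o t), false).
Proof. intros H F. simpl. rewrite H, F. reflexivity. Qed.
Lemma gg_Wp s o t : s (S t) = AW -> snd (gg s o t) = false -> s (S (S t)) = AW ->
  gg s o (S t) = (act_of (opp (o t)), true).
Proof. intros H F H2. simpl. rewrite H, F, H2. reflexivity. Qed.
Lemma gg_Ww s o t : s (S t) = AW -> snd (gg s o t) = false -> s (S (S t)) <> AW ->
  gg s o (S t) = (AW, false).
Proof. intros H F H2. simpl. rewrite H, F. destruct (s (S (S t))); congruence. Qed.

Lemma gg_valid s o0 : feasible s ->
  (forall t d, 1 <= t -> s t = act_of d -> (forall u, 1 <= u < t -> s u = AW) -> o0 = opp d) ->
  valid (fun t => fst (gg s (orient s o0) t))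
        (fun t => if snd (gg s (orient s o0) t) then opp (orient s o0 t) else orient s o0 t).
Proof.
  intros Hf Ho0. pose proof (orient_prop s o0 Hf Ho0) as Hop.
  set (o := orient s o0).
  assert (Hcase : forall t, (s (S t) <> AW /\ gg s o (S t) = (s (S t), false) /\ snd (gg s o t) = false) \/
     (s (S t) = AW /\ snd (gg s o t) = true /\ gg s o (S t) = (act_of (o t), false)) \/
     (s (S t) = AW /\ snd (gg s o t) = false /\ gg s o (S t) = (act_of (opp (o t)), true)) \/
     (s (S t) = AW /\ snd (gg s o t) = false /\ s (S (S t)) <> AW /\ gg s o (S t) = (AW, false))).
  { intros t. destruct (classic (s (S t) = AW)) as [H|H].
    - destruct (snd (gg s o t)) eqn:F.
      + right; left. split; auto. split; auto. apply gg_Wf; auto.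
      + destruct (classic (s (S (S t)) = AW)) as [H2|H2].
        * right; right; left. split; auto. split; auto. apply gg_Wp; auto.
        * right; right; right. split; auto. split; auto. split; auto. apply gg_Ww; auto.
    - left. split; auto. split; [apply gg_act; auto|].
      destruct (snd (gg s o t)) eqn:F; auto. apply gg_flag in F. congruence. }
  split; [|split].
  - intros t d. destruct (Hcase t) as [[H1 [H2 H3]]|[[H1 [H2 H3]]|[[H1 [H2 H3]]|[H1 [H2 [H3 H4]]]]]];
      rewrite ?H2, ?H3, ?H4; simpl; intros Hd.
    + split; [apply Hop; auto|]. apply orient_act; auto.
    + apply act_of_inj in Hd. subst d. split; auto. unfold o. apply orient_W; auto.
    + apply act_of_inj in Hd. subst d. rewrite opp_opp. split; auto. unfold o. rewrite orient_W; auto.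
    + exfalso. symmetry in Hd. apply (act_of_nW d); auto.
  - intros t. destruct (Hcase t) as [[H1 [H2 H3]]|[[H1 [H2 H3]]|[[H1 [H2 H3]]|[H1 [H2 [H3 H4]]]]]];
      rewrite ?H2, ?H3, ?H4; simpl; intros Hd; try (exfalso; apply (act_of_nW _ Hd)).
    + exfalso; auto.
    + unfold o. rewrite orient_W; auto.
  - intros t Ht [Ha Hb]. destruct t as [|t]; [lia|].
    destruct (Hcase t) as [[H1 [H2 H3]]|[[H1 [H2 H3]]|[[H1 [H2 H3]]|[H1 [H2 [H3 H4]]]]]];
      rewrite ?H2, ?H3, ?H4 in Ha; simpl in Ha; try (apply (act_of_nW _ Ha)).
    + auto.
    + rewrite gg_act in Hb by auto. simpl in Hb. auto.
Qed.

Lemma gg_queue k dr lam mu s o d t :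
  queue k dr lam mu (fun t => fst (gg s o t)) d t <= queue k dr lam mu s d t.
Proof.
  induction t; [simpl; lia|].
  rewrite !queue_S. destruct (act_eqb (fst (gg s o (S t))) (act_of d)) eqn:E1; [lia|].
  destruct (act_eqb (s (S t)) (act_of d)) eqn:E2; [|lia].
  exfalso. apply act_eqb_true in E2. rewrite gg_keep in E1 by (rewrite E2; apply act_of_nW).
  rewrite E2 in E1. destruct d; simpl in E1; discriminate.
Qed.

Lemma dominate k dr lam mu s : feasible s -> exists s2 o2, valid s2 o2 /\
  forall d t, queue k dr lam mu s2 d t <= queue k dr lam mu s d t.
Proof.
  intros Hf. destruct (first_dir s) as [o0 Ho0].
  exists (fun t => fst (gg s (orient s o0) t)).
  eexists. split; [apply gg_valid; auto|]. intros. apply gg_queue.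
Qed.

Definition Eqs k dr lam mu (s : schedule) (o : nat -> dir) x y : Prop :=
  (forall d, queue k dr lam mu s d x = queue k dr lam mu s d y) /\ o x = o y /\ (s x = AW <-> s y = AW).

Lemma reindex k dr lam mu s o (rho : nat -> nat) : valid s o -> rho 0 = 0 ->
  (forall t d, arr_dir k dr lam mu d (rho t) = arr_dir k dr lam mu d t) ->
  (forall t, exists y, rho (S t) = S y /\ (y = rho t \/ (1 <= y /\ Eqs k dr lam mu s o (rho t) y))) ->
  valid (fun t => s (rho t)) (fun t => o (rho t)) /\
  forall d t, queue k dr lam mu (fun t => s (rho t)) d t = queue k dr lam mu s d (rho t).
Proof.
  intros [V1 [V2 V3]] H0 Harr Hst.
  split; [split; [|split]|].
  - intros t d Hd. destruct (Hst t) as [y [Hy Hy']]. rewrite Hy in *.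
    destruct (V1 y d Hd) as [A B]. split; auto.
    destruct Hy' as [->|[_ [_ [E _]]]]; congruence.
  - intros t Hd. destruct (Hst t) as [y [Hy Hy']]. rewrite Hy in *.
    rewrite (V2 y Hd). destruct Hy' as [->|[_ [_ [E _]]]]; congruence.
  - intros t Ht [Ha Hb]. destruct t as [|t]; [lia|].
    destruct (Hst (S t)) as [y [Hy Hy']]. rewrite Hy in Hb.
    destruct Hy' as [->|[Hy1 [_ [_ E]]]].
    + destruct (Hst t) as [y' [Hy2 _]]. rewrite Hy2 in *. apply (V3 (S y')); [lia|auto].
    + apply (V3 y); auto. split; auto. apply E; auto.
  - intros d t. induction t.
    + simpl. rewrite H0. reflexivity.
    + destruct (Hst t) as [y [Hy Hy']]. rewrite queue_S. rewrite Hy, queue_S.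
      rewrite <- Hy, Harr, IHt.
      destruct Hy' as [->|[_ [E _]]]; [reflexivity|]. rewrite E. reflexivity.
Qed.

Fixpoint lprod (lam : nat -> nat) (n : nat) : nat :=
  match n with O => 1 | S m => lprod lam m * lam m end.

Lemma lprod_pos k lam mu : valid_instance k lam mu -> forall n, n <= k -> 1 <= lprod lam n.
Proof.
  intros Hv n. induction n; simpl; intros Hn; [lia|].
  destruct (Hv n ltac:(lia)) as [H1 _]. specialize (IHn ltac:(lia)). nia.
Qed.

Lemma lprod_div lam n i : i < n -> exists r, lprod lam n = lam i * r.
Proof.
  induction n; intros Hi; [lia|]. simpl.
  destruct (Nat.eq_dec i n) as [->|Hne].
  - exists (lprod lam n). ring.
  - destruct IHn as [r Hr]; [lia|]. exists (r * lam n). rewrite Hr. ring.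
Qed.

Lemma arr_period k dr lam mu d t m :
  arr_dir k dr lam mu d (t + m * lprod lam k) = arr_dir k dr lam mu d t.
Proof.
  unfold arr_dir. apply natsum_ext. intros i Hi.
  destruct (dir_eqb (dr i) d); [|reflexivity]. unfold arr.
  destruct (lprod_div lam k i Hi) as [r Hr]. rewrite Hr.
  replace (t + m * (lam i * r)) with (t + (m * r) * lam i) by ring.
  rewrite Nat.Div0.mod_add. reflexivity.
Qed.

Lemma mod_char a b q r : r < b -> a = b * q + r -> a mod b = r.
Proof. intros H1 H2. subst a. rewrite Nat.add_comm, Nat.mul_comm, Nat.Div0.mod_add. apply Nat.mod_small; auto. Qed.

Lemma mod_eq_shift x y L : 1 <= L -> x mod L = y mod L -> x <= y -> exists m, y = x + m * L.
Proof.
  intros HL Hm Hxy. pose proof (Nat.div_mod_eq x L). pose proof (Nat.div_mod_eq y L).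
  assert (x / L <= y / L) by (apply Nat.Div0.div_le_mono; auto).
  exists (y / L - x / L). rewrite Nat.mul_sub_distr_r. nia.
Qed.

Lemma php n (f : nat -> nat) : (forall i, i <= n -> f i < n) -> exists i j, i < j <= n /\ f i = f j.
Proof.
  revert f. induction n; intros f Hf.
  - specialize (Hf 0 ltac:(lia)). lia.
  - destruct (classic (exists i, i <= n /\ f i = f (S n))) as [[i [Hi Hfi]]|Hno].
    + exists i, (S n). split; [lia|auto].
    + set (g := fun i => if Nat.eqb (f i) n then f (S n) else f i).
      assert (Hg : forall i, i <= n -> g i < n).
      { intros i Hi. unfold g. destruct (Nat.eqb_spec (f i) n).
        - pose proof (Hf (S n) ltac:(lia)).
          destruct (Nat.eq_dec (f (S n)) n); [|lia]. exfalso. apply Hno. exists i. split; [auto|congruence].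
        - pose proof (Hf i ltac:(lia)). lia. }
      destruct (IHn g Hg) as [i [j [Hij Hgij]]]. unfold g in Hgij.
      destruct (Nat.eqb_spec (f i) n), (Nat.eqb_spec (f j) n).
      * exists i, j. split; [lia|congruence].
      * exfalso. apply Hno. exists j. split; [lia|congruence].
      * exfalso. apply Hno. exists i. split; [lia|congruence].
      * exists i, j. split; [lia|auto].
Qed.

Lemma fact_div M n : 1 <= n <= M -> exists q, fact M = n * q.
Proof.
  induction M; intros Hn; [lia|]. simpl fact.
  destruct (Nat.eq_dec n (S M)) as [->|Hne].
  - exists (fact M). reflexivity.
  - destruct IHM as [q Hq]; [lia|]. exists (S M * q). rewrite Hq. ring.
Qed.

Definition bo (d : dir) : nat := match d with Dn => 0 | Up => 1 end.
Definition bw (a : action) : nat := match a with AW => 1 | _ => 0 end.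
Definition BB k := 3 * k + 1.
Definition MM k lam := lprod lam k * (BB k * (BB k * 4)).

Definition code k dr lam mu (s : schedule) (o : nat -> dir) t :=
  t mod lprod lam k + lprod lam k * (queue k dr lam mu s Dn t + BB k * (queue k dr lam mu s Up t
     + BB k * (bo (o t) + 2 * bw (s t)))).

Lemma dec2 a b c d L : a < L -> c < L -> a + L * b = c + L * d -> a = c /\ b = d.
Proof. intros. assert (b = d) by nia. subst. lia. Qed.

Lemma code_lt k dr lam mu s o t : valid_instance k lam mu -> valid s o -> code k dr lam mu s o t < MM k lam.
Proof.
  intros Hv Hs. unfold code, MM.
  pose proof (lprod_pos k lam mu Hv k (le_n k)).
  pose proof (Nat.mod_upper_bound t (lprod lam k) ltac:(lia)).
  pose proof (queue_bound k dr lam mu s o Dn t Hs).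
  pose proof (queue_bound k dr lam mu s o Up t Hs).
  assert (bo (o t) + 2 * bw (s t) < 4) by (destruct (o t), (s t); simpl; lia).
  unfold BB. set (L := lprod lam k) in *. set (q1 := queue k dr lam mu s Dn t) in *.
  set (q2 := queue k dr lam mu s Up t) in *. set (z := bo (o t) + 2 * bw (s t)) in *.
  set (tm := t mod L) in *.
  assert (q2 + (3 * k + 1) * z < (3*k+1) * 4) by nia.
  assert (q1 + (3 * k + 1) * (q2 + (3 * k + 1) * z) < (3*k+1) * ((3*k+1) * 4)) by nia.
  nia.
Qed.

Lemma code_eq k dr lam mu s o x y : valid_instance k lam mu -> valid s o ->
  code k dr lam mu s o x = code k dr lam mu s o y -> x mod lprod lam k = y mod lprod lam k /\ Eqs k dr lam mu s o x y.
Proof.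
  intros Hv Hs Hc. unfold code in Hc.
  pose proof (lprod_pos k lam mu Hv k (le_n k)).
  pose proof (Nat.mod_upper_bound x (lprod lam k) ltac:(lia)).
  pose proof (Nat.mod_upper_bound y (lprod lam k) ltac:(lia)).
  apply dec2 in Hc; auto. destruct Hc as [Hm Hc]. split; auto.
  assert (HB : forall t d, queue k dr lam mu s d t < BB k) by (intros; pose proof (queue_bound k dr lam mu s o d t Hs); unfold BB; lia).
  apply dec2 in Hc; auto. destruct Hc as [Hq1 Hc].
  apply dec2 in Hc; auto. destruct Hc as [Hq2 Hc].
  split; [|split].
  - intros []; auto.
  - destruct (o x), (o y); simpl in Hc; auto; lia.
  - destruct (s x), (s y), (o x), (o y); simpl in Hc; split; intros; auto; try discriminate; lia.
Qed.

Lemma find_cycle k dr lam mu s o a : valid_instance k lam mu -> valid s o ->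
  exists i j, a <= i < j /\ j <= a + MM k lam /\ i mod lprod lam k = j mod lprod lam k /\ Eqs k dr lam mu s o i j.
Proof.
  intros Hv Hs.
  destruct (php (MM k lam) (fun x => code k dr lam mu s o (a + x))) as [x [y [Hxy Hc]]].
  { intros. apply code_lt; auto. }
  apply code_eq in Hc; auto. exists (a + x), (a + y). split; [lia|]. split; [lia|]. auto.
Qed.

Definition SS k dr lam mu s a n := natsum (fun t => cost k dr lam mu s (a + S t)) n.

Definition Cand k dr lam mu v : Prop := exists s o i j, valid s o /\ 1 <= i /\ i < j /\ j <= i + MM k lam /\
  i mod lprod lam k = j mod lprod lam k /\ Eqs k dr lam mu s o i j /\
  v * (j - i) = fact (MM k lam) * SS k dr lam mu s i (j - i).

Lemma cand_v k dr lam mu s o i j : valid s o -> 1 <= i -> i < j -> j <= i + MM k lam ->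
  i mod lprod lam k = j mod lprod lam k -> Eqs k dr lam mu s o i j ->
  exists v, Cand k dr lam mu v /\ v * (j - i) = fact (MM k lam) * SS k dr lam mu s i (j - i).
Proof.
  intros. destruct (fact_div (MM k lam) (j - i)) as [q Hq]; [lia|].
  exists (q * SS k dr lam mu s i (j - i)).
  assert (q * SS k dr lam mu s i (j - i) * (j - i) = fact (MM k lam) * SS k dr lam mu s i (j - i)) by (rewrite Hq; ring).
  split; auto. exists s, o, i, j. split; [|split; [|split; [|split; [|split; [|split]]]]]; auto.
Qed.

Definition s_alt : schedule := fun t => if Nat.even t then AU else AD.
Definition o_alt : nat -> dir := fun t => if Nat.even t then Up else Dn.

Lemma valid_alt : valid s_alt o_alt.
Proof.
  unfold s_alt, o_alt. split; [|split].
  - intros t d. rewrite Nat.even_succ, <- Nat.negb_even. destruct (Nat.even t); simpl; intros H;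
      destruct d; simpl in *; try discriminate; auto.
  - intros t. destruct (Nat.even (S t)); discriminate.
  - intros t _ [H _]. destruct (Nat.even t); discriminate.
Qed.

Lemma min_cand k dr lam mu : valid_instance k lam mu ->
  exists v0, Cand k dr lam mu v0 /\ forall v, Cand k dr lam mu v -> v0 <= v.
Proof.
  intros Hv.
  destruct (find_cycle k dr lam mu s_alt o_alt 1 Hv valid_alt) as [i [j [H1 [H2 [H3 H4]]]]].
  destruct (cand_v k dr lam mu s_alt o_alt i j valid_alt ltac:(lia) ltac:(lia) ltac:(lia) H3 H4) as [v [Hv1 _]].
  destruct (dec_inh_nat_subset_has_unique_least_element (Cand k dr lam mu) (fun n => classic _))
    as [v0 [[Hc Hmin] _]]; [exists v; auto|].
  exists v0. split; auto.
Qed.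

Lemma SS_split k dr lam mu s a n m : SS k dr lam mu s a (n + m) = SS k dr lam mu s a n + SS k dr lam mu s (a + n) m.
Proof.
  unfold SS. rewrite natsum_add. f_equal. apply natsum_ext. intros. f_equal. lia.
Qed.

Lemma SS_ext k dr lam mu s1 s2 a b n : (forall t, t < n -> cost k dr lam mu s1 (a + S t) = cost k dr lam mu s2 (b + S t)) ->
  SS k dr lam mu s1 a n = SS k dr lam mu s2 b n.
Proof. intros H. unfold SS. apply natsum_ext. auto. Qed.

Lemma lower_bound k dr lam mu v0 : valid_instance k lam mu ->
  (forall v, Cand k dr lam mu v -> v0 <= v) ->
  forall n s o a, valid s o -> 1 <= a -> v0 * (n - MM k lam) <= fact (MM k lam) * SS k dr lam mu s a n.
Proof.
  intros Hv Hmin n. induction n as [n IH] using lt_wf_ind. intros s o a Hs Ha.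
  set (M := MM k lam) in *. set (F := fact M) in *.
  destruct (le_lt_dec n M) as [Hn|Hn].
  { replace (n - M) with 0 by lia. lia. }
  destruct (find_cycle k dr lam mu s o a Hv Hs) as [i [j [H1 [H2 [H3 H4]]]]]. fold M in H2.
  destruct (cand_v k dr lam mu s o i j Hs ltac:(lia) ltac:(lia) ltac:(lia) H3 H4) as [v [Hcv Hv']].
  pose proof (Hmin v Hcv) as Hvv.
  pose proof (lprod_pos k lam mu Hv k (le_n k)).
  destruct (mod_eq_shift i j (lprod lam k)) as [m Hm]; auto; [lia|].
  set (D := j - i) in *.
  set (rho := fun t => if t <=? i then t else t + D).
  assert (Hr : valid (fun t => s (rho t)) (fun t => o (rho t)) /\
     forall d t, queue k dr lam mu (fun t => s (rho t)) d t = queue k dr lam mu s d (rho t)).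
  { apply reindex; auto.
    - intros t d. unfold rho. destruct (t <=? i); auto.
      replace D with (m * lprod lam k) by (unfold D; lia). apply arr_period.
    - intros t. unfold rho. destruct (Nat.leb_spec (S t) i).
      + exists t. split; auto. left. destruct (Nat.leb_spec t i); lia.
      + exists (t + D). split; [destruct (Nat.leb_spec t i); lia|].
        destruct (Nat.leb_spec t i).
        * right. replace t with i by lia. replace (i + D) with j by (unfold D; lia). split; [lia|auto].
        * left. reflexivity. }
  destruct Hr as [Hrv Hrq].
  assert (Hc : forall t, cost k dr lam mu (fun t => s (rho t)) t = cost k dr lam mu s (rho t)).
  { intros t. unfold cost. rewrite !Hrq. reflexivity. }
  specialize (IH (n - D) ltac:(unfold D; lia) _ _ a Hrv Ha).
  assert (E1 : SS k dr lam mu s a n = SS k dr lam mu s a (i - a) + SS k dr lam mu s i D + SS k dr lam mu s j (n - (j - a))).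
  { replace n with ((i - a) + D + (n - (j - a))) at 1 by (unfold D; lia).
    rewrite !SS_split. replace (a + (i - a)) with i by lia. replace (a + (i - a + D)) with j by (unfold D; lia). ring. }
  assert (E2 : SS k dr lam mu (fun t => s (rho t)) a (n - D) = SS k dr lam mu s a (i - a) + SS k dr lam mu s j (n - (j - a))).
  { replace (n - D) with ((i - a) + (n - (j - a))) by (unfold D; lia).
    rewrite SS_split. f_equal.
    - apply SS_ext. intros t Ht. rewrite Hc. unfold rho. destruct (Nat.leb_spec (a + S t) i); [reflexivity|lia].
    - replace (a + (i - a)) with i by lia. apply SS_ext. intros t Ht. rewrite Hc. unfold rho.
      destruct (Nat.leb_spec (i + S t) i); [lia|]. f_equal. unfold D. lia. }
  rewrite E2 in IH. rewrite E1.
  assert (n - M <= (n - D - M) + D) by lia.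
  assert (v0 * (n - M) <= v0 * (n - D - M) + v0 * D) by nia.
  assert (v0 * D <= v * D) by nia.
  change (fact (MM k lam)) with F in *. rewrite !Nat.mul_add_distr_l in *. lia.
Qed.

Lemma cost_le k dr lam mu s o t : valid s o -> cost k dr lam mu s t <= 6 * k.
Proof. intros Hs. unfold cost. pose proof (queue_bound k dr lam mu s o Dn t Hs). pose proof (queue_bound k dr lam mu s o Up t Hs). lia. Qed.

Lemma periodic k dr lam mu s0 o0 i0 j0 : valid_instance k lam mu -> valid s0 o0 -> 1 <= i0 -> i0 < j0 ->
  i0 mod lprod lam k = j0 mod lprod lam k -> Eqs k dr lam mu s0 o0 i0 j0 ->
  exists sp op, valid sp op /\ forall n,
    (j0 - i0) * SS k dr lam mu sp 0 n <= n * SS k dr lam mu s0 i0 (j0 - i0) +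
        (i0 + (j0 - i0)) * ((j0 - i0) * (6 * k) + SS k dr lam mu s0 i0 (j0 - i0)) /\
    n * SS k dr lam mu s0 i0 (j0 - i0) <= (j0 - i0) * SS k dr lam mu sp 0 n +
        (i0 + (j0 - i0)) * ((j0 - i0) * (6 * k) + SS k dr lam mu s0 i0 (j0 - i0)).
Proof.
  intros Hv Hs Hi Hij Hm HE.
  pose proof (lprod_pos k lam mu Hv k (le_n k)).
  destruct (mod_eq_shift i0 j0 (lprod lam k)) as [m Hm']; auto; [lia|].
  set (D := j0 - i0) in *.
  set (rho := fun t => if t <=? i0 then t else i0 + S ((t - S i0) mod D)).
  assert (HD : D = m * lprod lam k) by (unfold D; lia).
  assert (Hr : valid (fun t => s0 (rho t)) (fun t => o0 (rho t)) /\
     forall d t, queue k dr lam mu (fun t => s0 (rho t)) d t = queue k dr lam mu s0 d (rho t)).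
  { apply reindex; auto.
    - intros t d. unfold rho. destruct (Nat.leb_spec t i0); auto.
      pose proof (Nat.div_mod_eq (t - S i0) D).
      rewrite <- (arr_period k dr lam mu d (i0 + S ((t - S i0) mod D)) ((t - S i0) / D * m)).
      f_equal. rewrite HD in H1 |- *. nia.
    - intros t. unfold rho. destruct (Nat.leb_spec (S t) i0).
      + exists t. split; auto. left. destruct (Nat.leb_spec t i0); lia.
      + destruct (Nat.leb_spec t i0).
        * exists i0. replace (S t - S i0) with 0 by lia. rewrite Nat.Div0.mod_0_l. split; [lia|]. left. lia.
        * pose proof (Nat.div_mod_eq (t - S i0) D).
          pose proof (Nat.mod_upper_bound (t - S i0) D ltac:(lia)).
          set (r := (t - S i0) mod D) in *. set (q := (t - S i0) / D) in *.
          destruct (Nat.eq_dec (S r) D) as [Er|Er].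
          -- exists i0. rewrite (mod_char (S t - S i0) D (S q) 0); [|lia|nia]. split; [lia|].
             right. split; auto. replace (i0 + S r) with j0 by (unfold D in Er; lia).
             destruct HE as [E1 [E2 E3]]. split; [intros; symmetry; auto|]. split; [auto|]. tauto.
          -- exists (i0 + S r). rewrite (mod_char (S t - S i0) D q (S r)); [|lia|nia]. split; [lia|]. left; auto. }
  destruct Hr as [Hrv Hrq].
  set (sp := fun t => s0 (rho t)) in *.
  assert (Hc : forall t, cost k dr lam mu sp t = cost k dr lam mu s0 (rho t)).
  { intros t. unfold cost. rewrite !Hrq. reflexivity. }
  assert (Hper : forall t, i0 < t -> rho (t + D) = rho t).
  { intros t Ht. unfold rho. destruct (Nat.leb_spec (t + D) i0); [lia|]. destruct (Nat.leb_spec t i0); [lia|].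
    replace (t + D - S i0) with ((t - S i0) + 1 * D) by lia. rewrite Nat.Div0.mod_add. reflexivity. }
  assert (Hid : forall t, i0 < t <= j0 -> rho t = t).
  { intros t Ht. unfold rho. destruct (Nat.leb_spec t i0); [lia|]. rewrite Nat.mod_small by (unfold D; lia). lia. }
  set (sum0 := SS k dr lam mu s0 i0 D).
  assert (W0 : SS k dr lam mu sp i0 D = sum0).
  { apply SS_ext. intros t Ht. rewrite Hc, Hid; [reflexivity|unfold D in *; lia]. }
  assert (W1 : forall n, SS k dr lam mu sp (i0 + n) D = sum0).
  { induction n; [rewrite Nat.add_0_r; auto|].
    rewrite <- IHn.
    pose proof (SS_split k dr lam mu sp (i0 + n) 1 D) as A1.
    pose proof (SS_split k dr lam mu sp (i0 + n) D 1) as A2.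
    replace (1 + D) with (D + 1) in A1 by lia. rewrite A1 in A2.
    unfold SS at 1 4 in A2. simpl natsum in A2.
    rewrite !Hc in A2. rewrite <- Nat.add_assoc in A2. replace (i0 + n + D + 1) with ((i0 + n + 1) + D) in A2 by lia.
    rewrite Hper in A2 by lia. replace (i0 + (n + 1)) with (i0 + n + 1) in A2 by lia. replace (i0 + S n) with (i0 + n + 1) by lia. lia. }
  assert (W2 : forall mm q, i0 <= mm -> SS k dr lam mu sp 0 (mm + q * D) = SS k dr lam mu sp 0 mm + q * sum0).
  { intros mm q Hmm. induction q; [simpl; rewrite Nat.add_0_r; lia|].
    replace (mm + S q * D) with ((mm + q * D) + D) by lia. rewrite SS_split, IHq.
    replace (0 + (mm + q * D)) with (i0 + (mm + q * D - i0)) by lia. rewrite W1. lia. }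
  assert (Abound : forall n, SS k dr lam mu sp 0 n <= n * (6 * k)).
  { intros n. apply natsum_bound. intros. apply (cost_le k dr lam mu sp (fun t => o0 (rho t))); auto. }
  exists sp, (fun t => o0 (rho t)). split; auto. intros n.
  fold sum0.
  set (K := (i0 + D) * (D * (6 * k) + sum0)).
  destruct (le_lt_dec i0 n) as [Hn|Hn].
  - pose proof (Nat.div_mod_eq (n - i0) D).
    pose proof (Nat.mod_upper_bound (n - i0) D ltac:(lia)).
    set (r := (n - i0) mod D) in *. set (q := (n - i0) / D) in *.
    replace n with ((i0 + r) + q * D) by nia.
    rewrite W2 by lia. pose proof (Abound (i0 + r)).
    set (Am := SS k dr lam mu sp 0 (i0 + r)) in *.
    assert (D * Am <= K) by (unfold K; nia).
    assert ((i0 + r) * sum0 <= K) by (unfold K; nia).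
    split; nia.
  - pose proof (Abound n). split; unfold K; nia.
Qed.

Open Scope R_scope.

Lemma R1 (A s K D N : R) : 0 < D -> 0 < N -> D * A <= N * s + K -> A / N <= s / D + (K / D) / N.
Proof.
  intros HD HN H. apply (Rmult_le_reg_r (D * N)); [apply Rmult_lt_0_compat; auto|].
  replace (A / N * (D * N)) with (D * A) by (field; lra).
  replace ((s / D + K / D / N) * (D * N)) with (N * s + K) by (field; lra). exact H.
Qed.

Lemma R2 (A s K D N : R) : 0 < D -> 0 < N -> N * s <= D * A + K -> s / D - (K / D) / N <= A / N.
Proof.
  intros HD HN H. apply (Rmult_le_reg_r (D * N)); [apply Rmult_lt_0_compat; auto|].
  replace (A / N * (D * N)) with (D * A) by (field; lra).
  replace ((s / D - K / D / N) * (D * N)) with (N * s - K) by (field; lra). lra.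
Qed.

Lemma lim_c_over (c : R) : is_lim_seq (fun n => c / INR (S n)) 0.
Proof.
  assert (H1 : is_lim_seq (fun n => INR (S n)) p_infty) by (apply (is_lim_seq_incr_1 INR); apply is_lim_seq_INR).
  assert (H2 : is_lim_seq (fun n => / INR (S n)) 0).
  { apply (is_lim_seq_inv _ _ H1). discriminate. }
  apply (is_lim_seq_scal_l _ c) in H2. simpl in H2. rewrite Rmult_0_r in H2.
  apply (is_lim_seq_ext _ _ _ (fun n => eq_refl)) in H2. exact H2.
Qed.

Lemma INR_S_pos n : 0 < INR (S n).
Proof. apply lt_0_INR. lia. Qed.

Theorem lemma5 (k : nat) (dr : nat -> dir) (lam mu : nat -> nat)
  (Hvalid : valid_instance k lam mu) :
  exists s : schedule, optimal k dr lam mu s /\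
    forall t, (1 <= t)%nat -> ~ (s t = AW /\ s (S t) = AW).
Proof.
  destruct (min_cand k dr lam mu Hvalid) as [v0 [[s0 [o0 [i0 [j0 [Hs [Hi [Hij [Hj [Hm [HE Hv0]]]]]]]]]] Hmin]].
  destruct (periodic k dr lam mu s0 o0 i0 j0 Hvalid Hs Hi Hij Hm HE) as [sp [op [Hsp Hb]]].
  set (M := MM k lam) in *. set (F := fact M) in *.
  set (D := (j0 - i0)%nat) in *. set (sum0 := SS k dr lam mu s0 i0 D) in *.
  set (K := ((i0 + D) * (D * (6 * k) + sum0))%nat) in *.
  assert (HF : 0 < INR F) by (apply lt_0_INR; apply lt_O_fact).
  assert (HD : 0 < INR D) by (apply lt_0_INR; unfold D; lia).
  assert (Hval : INR sum0 / INR D = INR v0 / INR F).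
  { assert (INR v0 * INR D = INR F * INR sum0) by (rewrite <- !mult_INR; f_equal; exact Hv0).
    apply (Rmult_eq_reg_r (INR D * INR F)); [|apply Rgt_not_eq, Rmult_lt_0_compat; auto]. field_simplify; [|lra|lra]. lra. }
  exists sp. split.
  - split; [apply (valid_feasible sp op Hsp)|].
    exists (Finite (INR v0 / INR F)). split.
    + unfold Cavg_is. apply (is_lim_seq_le_le
        (fun n => INR v0 / INR F - (INR K / INR D) / INR (S n)) _
        (fun n => INR v0 / INR F + (INR K / INR D) / INR (S n))).
      * intros n. destruct (Hb (S n)) as [B1 B2]. unfold avg_cost. rewrite <- Hval. split.
        -- apply R2; [auto|apply INR_S_pos|]. rewrite <- !mult_INR, <- plus_INR. apply le_INR. exact B2.
        -- apply R1; [auto|apply INR_S_pos|]. rewrite <- !mult_INR, <- plus_INR. apply le_INR. exact B1.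
      * replace (Finite (INR v0 / INR F)) with (Finite (INR v0 / INR F - 0)) by (f_equal; ring).
        apply is_lim_seq_minus'; [apply is_lim_seq_const|apply lim_c_over].
      * replace (Finite (INR v0 / INR F)) with (Finite (INR v0 / INR F + 0)) by (f_equal; ring).
        apply is_lim_seq_plus'; [apply is_lim_seq_const|apply lim_c_over].
    + intros s' l' Hf Hl.
      destruct (dominate k dr lam mu s' Hf) as [s2 [o2 [Hs2 Hq]]].
      apply (is_lim_seq_le (fun n => INR v0 / INR F - (INR (v0 * (M + 1)) / INR F) / INR (S n)) (avg_cost k dr lam mu s')).
      * intros n. unfold avg_cost.
        apply Rle_trans with (INR (SS k dr lam mu s2 0 (S n)) / INR (S n)).
        -- apply R2; [auto|apply INR_S_pos|]. rewrite <- !mult_INR, <- plus_INR. apply le_INR.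
           pose proof (lower_bound k dr lam mu v0 Hvalid Hmin n s2 o2 1 Hs2 (le_n 1)) as LB.
           fold M F in LB.
           pose proof (SS_split k dr lam mu s2 0 1 n) as Sp. simpl plus in Sp.
           assert (v0 * (n - M) + v0 * (M + 1) >= v0 * S n)%nat by nia.
           replace (1 + n)%nat with (S n) in Sp by lia. replace (0 + 1)%nat with 1%nat in Sp by lia. rewrite Sp, Nat.mul_add_distr_l. lia.
        -- unfold Rdiv. apply Rmult_le_compat_r; [left; apply Rinv_0_lt_compat, INR_S_pos|].
           apply le_INR. apply natsum_le. intros i _. change (0 + S i)%nat with (S i). unfold cost.
           pose proof (Hq Dn (S i)). pose proof (Hq Up (S i)). lia.
      * replace (Finite (INR v0 / INR F)) with (Finite (INR v0 / INR F - 0)) by (f_equal; ring).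
        apply is_lim_seq_minus'; [apply is_lim_seq_const|apply lim_c_over].
      * exact Hl.
  - intros t Ht. destruct Hsp as [_ [_ H3]]. apply H3; auto.
Qed.
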